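(* Let $\mathbf S=\langle S,\wedge,1\rangle$ be a complete meet semilattice, and let $\operatorname{Sub}\mathbf S$ denote the lattice of all complete subsemilattices of $\mathbf S$ (subsets closed under arbitrary meets). Then there is a dual isomorphism between the complete sublattices of $\operatorname{Sub}\mathbf S$ and the quasi-orders $\varepsilon$ on $S$ satisfying: (1)$'$ if $\bigwedge_i c_i\,\varepsilon\,d$ then there exist elements $d_i$ with $c_i\,\varepsilon\,d_i$ for each $i$ and $d=\bigwedge_i d_i$; (2) if $1\,\varepsilon\,d$ then $d=1$; (3)$'$ if $c\,\varepsilon\,c_i$ for all $i$, then $c\,\varepsilon\,\bigwedge_i c_i$; (4) $c\,\varepsilon\,1$ for all $c\in S$. Under this correspondence, a complete sublattice $\mathbf T$ corresponds to the quasi-order $\rho$ with $c\,\rho\,d$ iff $c\in X\Rightarrow d\in X$ for all $X\in\mathbf T$, and a quasi-order $\varepsilon$ corresponds to the lattice of $\varepsilon$-closed complete subsemilattices.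
   Context: A subset $X$ is $\varepsilon$-closed if $c\in X$ and $c\,\varepsilon\,d$ imply $d\in X$. A complete sublattice of $\operatorname{Sub}\mathbf S$ is a subset closed under arbitrary meets and joins computed in $\operatorname{Sub}\mathbf S$. Quasi-orders are ordered by inclusion. *)

(* Defs.v *)
Set Implicit Arguments.
Unset Strict Implicit.

(** A complete meet semilattice S = <S, /\, 1>, presented through its
    partial order together with an infimum for every subset. *)
Record cmsl := CMSL {
  carrier :> Type;
  le : carrier -> carrier -> Prop;
  le_refl : forall x, le x x;
  le_trans : forall x y z, le x y -> le y z -> le x z;
  le_anti : forall x y, le x y -> le y x -> x = y;
  inf : (carrier -> Prop) -> carrier;
  inf_lb : forall (A : carrier -> Prop) x, A x -> le (inf A) x;
  inf_glb : forall (A : carrier -> Prop) y,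
      (forall x, A x -> le y x) -> le y (inf A)
}.

Section Defs.
Variable S : cmsl.

Definition meetI (I : Type) (c : I -> S) : S := inf (fun x => exists i, c i = x).

Definition top : S := inf (fun _ => False).

Definition is_subsl (X : S -> Prop) : Prop :=
  forall A : S -> Prop, (forall x, A x -> X x) -> X (inf A).

Definition Sub_meet (F : (S -> Prop) -> Prop) : S -> Prop :=
  fun x => forall X, F X -> X x.
Definition Sub_join (F : (S -> Prop) -> Prop) : S -> Prop :=
  fun x => forall Y, is_subsl Y -> (forall X, F X -> forall y, X y -> Y y) -> Y x.

Definition complete_sublattice (T : (S -> Prop) -> Prop) : Prop :=
  (forall X, T X -> is_subsl X) /\
  (forall F : (S -> Prop) -> Prop, (forall X, F X -> T X) -> T (Sub_meet F)) /\
  (forall F : (S -> Prop) -> Prop, (forall X, F X -> T X) -> T (Sub_join F)).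

Definition quasi_order (e : S -> S -> Prop) : Prop :=
  (forall c, e c c) /\ (forall c d f, e c d -> e d f -> e c f).

Definition cond1' (e : S -> S -> Prop) : Prop :=
  forall (I : Type) (c : I -> S) (d : S), e (meetI c) d ->
    exists dd : I -> S, (forall i, e (c i) (dd i)) /\ d = meetI dd.
Definition cond2 (e : S -> S -> Prop) : Prop := forall d, e top d -> d = top.
Definition cond3' (e : S -> S -> Prop) : Prop :=
  forall (I : Type) (c : S) (cs : I -> S), (forall i, e c (cs i)) -> e c (meetI cs).
Definition cond4 (e : S -> S -> Prop) : Prop := forall c, e c top.

Definition admissible (e : S -> S -> Prop) : Prop :=
  quasi_order e /\ cond1' e /\ cond2 e /\ cond3' e /\ cond4 e.

Definition rho_of (T : (S -> Prop) -> Prop) : S -> S -> Prop :=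
  fun c d => forall X, T X -> X c -> X d.

Definition eps_closed (e : S -> S -> Prop) (X : S -> Prop) : Prop :=
  forall c d, X c -> e c d -> X d.

Definition lat_of (e : S -> S -> Prop) : (S -> Prop) -> Prop :=
  fun X => is_subsl X /\ eps_closed e X.

End Defs.

(* Main.v *)
Require Import Defs.
From Stdlib Require Import FunctionalExtensionality PropExtensionality.

Section H.
Variable S : cmsl.

Lemma inf_mono (A B : S -> Prop) : (forall x, A x -> B x) -> le (inf B) (inf A).
Proof. intros H. apply inf_glb. intros x Ax. apply inf_lb. auto. Qed.

Lemma inf_ext (A B : S -> Prop) : (forall x, A x <-> B x) -> inf A = inf B.
Proof. intros H. apply le_anti; apply inf_mono; intros x Hx; apply H; auto. Qed.

Lemma meetI_sig (A : S -> Prop) : meetI (fun i : {x | A x} => proj1_sig i) = inf A.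
Proof.
  unfold meetI. apply inf_ext. intros x; split.
  - intros [[y Hy] E]. simpl in E. subst. auto.
  - intros Ax. exists (exist _ x Ax). reflexivity.
Qed.

Lemma subsl_top (X : S -> Prop) : is_subsl X -> X (top S).
Proof. intros H. apply H. intros x [] . Qed.

Lemma inf_single (x : S) : inf (fun y => y = x) = x.
Proof.
  apply le_anti. apply inf_lb. reflexivity.
  apply inf_glb. intros y ->. apply le_refl.
Qed.

Lemma sub_join_subsl (F : (S -> Prop) -> Prop) : is_subsl (Sub_join F).
Proof.
  intros A HA Y HY HF. apply HY. intros x Ax. apply (HA x Ax Y HY HF).
Qed.

Lemma sub_join_in (F : (S -> Prop) -> Prop) X x : F X -> X x -> Sub_join F x.
Proof. intros FX Xx Y HY HF. exact (HF X FX x Xx). Qed.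

Lemma L3 (T : (S -> Prop) -> Prop) (X : S -> Prop) :
  complete_sublattice T -> is_subsl X -> eps_closed (rho_of T) X -> T X.
Proof.
  intros [HT [HM HJ]] HX HC.
  set (Xc := fun c => Sub_meet (fun Y => T Y /\ Y c)).
  set (F := fun Y => exists c, X c /\ Y = Xc c).
  assert (FT : forall Y, F Y -> T Y).
  { intros Y [c [_ ->]]. apply HM. intros Z [HZ _]; auto. }
  assert (E : Sub_join F = X).
  { apply functional_extensionality; intros x; apply propositional_extensionality; split.
    - intros Hx. apply Hx; auto. intros Y [c [Xc' ->]] y Hy.
      apply (HC c y Xc'). intros Z TZ Zc. apply Hy. auto.
    - intros Xx. apply (sub_join_in F (Xc x)). exists x; auto.
      intros Y [_ Yx]; auto. }
  rewrite <- E. apply HJ. auto.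
Qed.

Theorem part1 (T : (S -> Prop) -> Prop) :
  complete_sublattice T -> admissible (rho_of T).
Proof.
  intros CT. destruct CT as [HT [HM HJ]].
  split; [|split; [|split; [|split]]].
  - split. { intros c X _ H; exact H. } { intros c d f Hcd Hdf X TX Xc; exact (Hdf X TX (Hcd X TX Xc)). }
  - intros I c d Hd.
    set (Xi := fun i => Sub_meet (fun Y => T Y /\ Y (c i))).
    set (F := fun Y => exists i, Y = Xi i).
    assert (FT : forall Y, F Y -> T Y).
    { intros Y [i ->]. apply HM. intros Z [HZ _]; auto. }
    set (U := fun x => exists i, Xi i x).
    set (W := fun w => exists B, (forall x, B x -> U x) /\ w = inf B).
    assert (TZ := HJ F FT).
    assert (Zd : Sub_join F d).
    { apply Hd; auto. apply (HT _ TZ). intros x [i <-].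
      apply (sub_join_in F (Xi i)). exists i; reflexivity.
      intros Y [_ Yc]; auto. }
    assert (Wd : W d).
    { apply Zd.
      - intros A HA.
        exists (fun x => exists a B, A a /\ (forall y, B y -> U y) /\ a = inf B /\ B x).
        split.
        + intros x [a [B [_ [HB [_ Bx]]]]]. auto.
        + apply le_anti.
          * apply inf_glb. intros x [a [B [Aa [_ [-> Bx]]]]].
            apply le_trans with (inf B). apply inf_lb; auto. apply inf_lb; auto.
          * apply inf_glb. intros a Aa. destruct (HA a Aa) as [B [HB ->]].
            apply inf_mono. intros x Bx. exists (inf B), B; auto.
      - intros X [i ->] y Hy. exists (fun z => z = y). split.
        intros z ->. exists i; auto. symmetry; apply inf_single. }
    destruct Wd as [B [HB ->]].
    exists (fun i => inf (fun x => B x /\ Xi i x)). split.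
    + intros i Y TY Yc. apply (HT _ TY). intros x [_ Hx]. apply Hx. auto.
    + unfold meetI. apply le_anti.
      * apply inf_glb. intros y [i <-]. apply inf_mono. intros x [Bx _]; auto.
      * apply inf_glb. intros x Bx. destruct (HB x Bx) as [i Hi].
        apply le_trans with (inf (fun x => B x /\ Xi i x)).
        apply inf_lb. exists i; reflexivity. apply inf_lb. auto.
  - intros d Hd.
    assert (TZ := HJ (fun _ => False) (fun _ H => match H with end)).
    assert (Zd : Sub_join (fun _ => False) d).
    { apply Hd; auto. apply subsl_top. apply HT; auto. }
    apply Zd. 2: intros X [].
    intros A HA. apply le_anti.
    + apply inf_glb. intros x [].
    + apply inf_glb. intros x Ax. rewrite (HA x Ax). apply le_refl.
  - intros I c cs H X TX Xc. apply (HT _ TX). intros x [i <-]. apply H; auto.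
  - intros c X TX _. apply subsl_top. auto.
Qed.

Theorem part2 (e : S -> S -> Prop) : admissible e -> complete_sublattice (lat_of e).
Proof.
  intros [[Hr Ht] [H1 [H2 [H3 H4]]]]. split; [|split].
  - intros X [H _]; auto.
  - intros F HF. split.
    + intros A HA X FX. apply (proj1 (HF X FX)). intros x Ax. exact (HA x Ax X FX).
    + intros c d Hc Hcd X FX. exact (proj2 (HF X FX) c d (Hc X FX) Hcd).
  - intros F HF. split. apply sub_join_subsl.
    set (Y := fun c => forall d, e c d -> Sub_join F d).
    assert (HY : is_subsl Y).
    { intros A HA d Hd. rewrite <- meetI_sig in Hd.
      destruct (H1 _ _ _ Hd) as [dd [Hdd ->]].
      apply sub_join_subsl. intros x [i <-]. apply (HA _ (proj2_sig i)). auto. }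
    intros c d Hc Hcd. refine (Hc Y HY _ d Hcd).
    intros X FX x Xx d' Hd'. apply (sub_join_in F X); auto.
    apply (proj2 (HF X FX) x d'); auto.
Qed.

Theorem part4 (e : S -> S -> Prop) : admissible e -> rho_of (lat_of e) = e.
Proof.
  intros [[Hr Ht] [H1 [H2 [H3 H4]]]].
  apply functional_extensionality; intros c.
  apply functional_extensionality; intros d.
  apply propositional_extensionality; split.
  - intros H. apply (H (fun x => e c x)); auto. split.
    + intros A HA. rewrite <- meetI_sig. apply H3. intros [x Ax]. simpl. auto.
    + intros x y Hx Hy. eauto.
  - intros Hcd X [_ HX] Xc. apply (HX c d); auto.
Qed.

End H.

Theorem theorem8p2 (S : cmsl) :
  (forall T : (S -> Prop) -> Prop,
      complete_sublattice T -> admissible (rho_of T)) /\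
  (forall e : S -> S -> Prop, admissible e -> complete_sublattice (lat_of e)) /\
  (forall T : (S -> Prop) -> Prop,
      complete_sublattice T -> lat_of (rho_of T) = T) /\
  (forall e : S -> S -> Prop, admissible e -> rho_of (lat_of e) = e) /\
  (forall T1 T2 : (S -> Prop) -> Prop,
      complete_sublattice T1 -> complete_sublattice T2 ->
      ((forall X, T1 X -> T2 X) <->
       (forall c d, rho_of T2 c d -> rho_of T1 c d))).
Proof.
  split; [apply part1|split; [apply part2|split; [|split; [apply part4|]]]].
  - intros T CT. apply functional_extensionality; intros X.
    apply propositional_extensionality; split.
    + intros [H1 H2]. apply L3; auto.
    + intros TX. split. destruct CT as [HT _]; auto.
      intros c d Xc H. apply H; auto.
  - intros T1 T2 C1 C2. split.
    + intros H c d H2 X T1X Xc. apply H2; auto.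
    + intros H X T1X. apply L3; auto. destruct C1 as [HT _]; auto.
      intros c d Xc Hcd. apply (H c d Hcd X T1X Xc).
Qed.
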